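(* Let $M=(\mathbf{K}^{\mathbf{n}},\rho)$ be a sum-matroid of rank $k=\rho(\mathbf{K}^{\mathbf{n}})$, let $M^*=(\mathbf{K}^{\mathbf{n}},\rho^* )$ be its dual, and let $n=n_1+\cdots+n_\ell$. Let $d_i=d^S_i(M)$ for $i=1,\dots,n-k$ and $d_j^\perp=d^S_j(M^* )$ for $j=1,\dots,k$. Then $$\{1,2,\dots,n\}=\{d_1^\perp,\dots,d_k^\perp\}\cup\{n+1-d_1,\dots,n+1-d_{n-k}\},$$ and the union is disjoint. In particular, the generalized weights of $M$ uniquely determine those of $M^*$.
   Context: $\ell,n_1,\dots,n_\ell$ positive integers, $K_1,\dots,K_\ell$ finite fields. $\mathcal{P}(\mathbf{K}^{\mathbf{n}})=\mathcal{P}(K_1^{n_1})\times\cdots\times\mathcal{P}(K_\ell^{n_\ell})$, $\mathcal{P}(K_i^{n_i})$ the lattice of $K_i$-subspaces of $K_i^{n_i}$, with componentwise inclusion, sum, intersection, and orthogonal complement $\mathcal{L}^\perp$ (w.r.t. the standard bilinear form on each $K_i^{n_i}$); $\mathrm{Rk}(\mathcal{L})=\sum_i\dim_{K_i}\mathcal{L}_i$; $\mathbf{K}^{\mathbf{n}}=(K_1^{n_1},\dots,K_\ell^{n_\ell})$. A sum-matroid is $(\mathbf{K}^{\mathbf{n}},\rho)$ with $\rho:\mathcal{P}(\mathbf{K}^{\mathbf{n}})\to\mathbb{Z}_{\ge0}$ satisfying (R1) $0\le\rho(\mathcal{L})\le\mathrm{Rk}(\mathcal{L})$; (R2) $\mathcal{L}\subseteq\mathcal{L}'\Rightarrow\rho(\mathcal{L})\le\rho(\mathcal{L}')$;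 (R3) $\rho(\mathcal{L}+\mathcal{L}')+\rho(\mathcal{L}\cap\mathcal{L}')\le\rho(\mathcal{L})+\rho(\mathcal{L}')$. The dual $M^*$ has rank function $\rho^*(\mathcal{L})=\rho(\mathcal{L}^\perp)+\mathrm{Rk}(\mathcal{L})-\rho(\mathbf{K}^{\mathbf{n}})$. For a sum-matroid with rank function $\rho$, nullity is $\eta(\mathcal{L})=\mathrm{Rk}(\mathcal{L})-\rho(\mathcal{L})$, and the $i$-th generalized weight is $d^S_i=\min\{\mathrm{Rk}(\mathcal{L}):\mathcal{L}\in\mathcal{P}(\mathbf{K}^{\mathbf{n}}),\ \eta(\mathcal{L})=i\}$ for $i=1,\dots,\eta(\mathbf{K}^{\mathbf{n}})$. *)

(* Defs.v *)
From HB Require Import structures.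
From mathcomp Require Import all_boot all_algebra all_field.
Set Implicit Arguments. Unset Strict Implicit. Unset Printing Implicit Defensive.
Import GRing.Theory.
Local Open Scope ring_scope.

(* An element of P(K^n) = P(K_1^{n_1}) x ... x P(K_l^{n_l}):
   a family of subspaces, the i-th one a K_i-subspace of K_i^{n_i}
   (vectors of K_i^{n_i} are row vectors 'rV[K i]_(n i)). *)
Definition subsp (l : nat) (K : 'I_l -> finFieldType) (n : 'I_l -> nat) :=
  forall i : 'I_l, {vspace 'rV[K i]_(n i)}.

Section SumMatroid.
Variables (l : nat) (K : 'I_l -> finFieldType) (n : 'I_l -> nat).
Local Notation L := (subsp K n).

Definition sfull : L := fun i => fullv.
Definition sadd (X Y : L) : L := fun i => (X i + Y i)%VS.
Definition scap (X Y : L) : L := fun i => (X i :&: Y i)%VS.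
Definition ssub (X Y : L) : Prop := forall i, (X i <= Y i)%VS.

Definition vperp (m : nat) (F : finFieldType) (U : {vspace 'rV[F]_m})
  : {vspace 'rV[F]_m} :=
  <<[seq v | v in [pred v : 'rV[F]_m |
        [forall u : 'rV[F]_m, (u \in U) ==> ((v *m u^T)%R ord0 ord0 == 0%R)]]]>>%VS.
Definition sperp (X : L) : L := fun i => vperp (X i).

Definition Rk (X : L) : nat := (\sum_(i < l) \dim (X i))%N.

Definition is_sum_matroid (rho : L -> nat) : Prop :=
  [/\ (forall X, rho X <= Rk X)%N,
      (forall X Y, ssub X Y -> rho X <= rho Y)%N &
      (forall X Y, rho (sadd X Y) + rho (scap X Y) <= rho X + rho Y)%N].

(* dual rank function: rho*(X) = rho(X^perp) + Rk(X) - rho(K^n)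
   (never truncated for a sum-matroid) *)
Definition dual_rank (rho : L -> nat) (X : L) : nat :=
  (rho (sperp X) + Rk X - rho sfull)%N.

Definition nullity (rho : L -> nat) (X : L) : nat := (Rk X - rho X)%N.

Definition is_gen_weight (rho : L -> nat) (i d : nat) : Prop :=
  (exists X, nullity rho X = i /\ Rk X = d) /\
  (forall X, nullity rho X = i -> (d <= Rk X)%N).

End SumMatroid.

(* Main.v *)
Require Import Defs.
From mathcomp Require Import all_boot all_algebra all_field.
From mathcomp Require Import zify.
From Stdlib Require Import ClassicalEpsilon FunctionalExtensionality.
Set Implicit Arguments. Unset Strict Implicit. Unset Printing Implicit Defensive.
Import GRing.Theory.

Section Perp.
Local Open Scope ring_scope.
Variables (F : finFieldType) (m : nat).
Implicit Types (U : {vspace 'rV[F]_m}) (u v : 'rV[F]_m).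

Definition dotf u v : F := (u *m v^T) ord0 ord0.

Lemma dotfE u v : dotf u v = \sum_j u ord0 j * v ord0 j.
Proof. by rewrite /dotf mxE; apply: eq_bigr => j _; rewrite mxE. Qed.

Lemma dotfC u v : dotf u v = dotf v u.
Proof. by rewrite !dotfE; apply: eq_bigr => j _; rewrite mulrC. Qed.

Lemma dotf_sumr u (I : finType) (c : I -> F) (b : I -> 'rV[F]_m) :
  dotf u (\sum_i c i *: b i) = \sum_i c i * dotf u (b i).
Proof.
rewrite dotfE.
under eq_bigr => j _ do rewrite summxE big_distrr /=.
rewrite exchange_big /=; apply: eq_bigr => i _.
rewrite dotfE big_distrr /=; apply: eq_bigr => j _.
by rewrite mxE mulrCA.
Qed.

Definition bmx U : 'M[F]_(\dim U, m) := \matrix_(i, j) ((vbasis U)`_i ord0 j).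

Lemma bmxE U v i : (v *m (bmx U)^T) ord0 i = dotf v (vbasis U)`_i.
Proof. by rewrite mxE dotfE; apply: eq_bigr => j _; rewrite !mxE. Qed.

Definition phi U : 'Hom('rV[F]_m, 'rV[F]_(\dim U)) := linfun (@mulmxr F 1 m (\dim U) (bmx U)^T).

Lemma key U v : (v *m (bmx U)^T == 0) = [forall u, (u \in U) ==> (dotf v u == 0)].
Proof.
apply/eqP/forallP => [H u|H].
  apply/implyP => /coord_vbasis ->; rewrite dotf_sumr big1 // => i _.
  by have := congr1 (fun M : 'rV[F]_(\dim U) => M ord0 i) H; rewrite bmxE mxE => ->; rewrite mulr0.
apply/rowP => i; rewrite bmxE mxE; apply/eqP.
by have /implyP := H (vbasis U)`_i; apply; rewrite vbasis_mem // mem_nth // size_tuple.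
Qed.

Lemma phiE U v : phi U v = v *m (bmx U)^T.
Proof. by rewrite lfunE. Qed.

Lemma vperp_ker U : vperp U = lker (phi U).
Proof.
apply/eqP; rewrite eqEsubv; apply/andP; split.
  apply/span_subvP => x /imageP [y]; rewrite inE => Hy ->.
  by rewrite memv_ker phiE key.
apply/subvP => v; rewrite memv_ker phiE key => Hv.
by apply: memv_span; apply: image_f; rewrite inE.
Qed.

Lemma memv_perp U v : (v \in vperp U) = [forall u, (u \in U) ==> (dotf v u == 0)].
Proof. by rewrite vperp_ker memv_ker phiE key. Qed.


Lemma bmx_free U : row_free (bmx U).
Proof.
apply: inj_row_free => x Hx.
have H : \sum_i x ord0 i *: (vbasis U)`_i = 0.
  rewrite -[RHS]Hx mulmx_sum_row; apply: eq_bigr => i _; congr (_ *: _).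
  by apply/rowP => j; rewrite !mxE.
have Hi := (freeP (basis_free (vbasisP U))) _ H.
by apply/rowP => i; rewrite Hi mxE.
Qed.

Lemma limg_phi U : limg (phi U) = fullv.
Proof.
apply/eqP; rewrite eqEsubv subvf /=; apply/subvP => w _.
have : row_full (bmx U)^T by rewrite /row_full mxrank_tr; exact: bmx_free.
case/row_fullP => C HC; apply/memv_imgP; exists (w *m C); first exact: memvf.
by rewrite phiE -mulmxA HC mulmx1.
Qed.

Lemma dimv_le U : (\dim U <= m)%N.
Proof. by have := dimvS (subvf U); rewrite dimvf dim_matrix mul1r. Qed.

Lemma dim_vperp U : \dim (vperp U) = (m - \dim U)%N.
Proof.
have := limg_ker_dim (phi U) fullv.
rewrite capfv limg_phi !dimvf !dim_matrix vperp_ker !mul1r => H.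
by apply/eqP; rewrite -(eqn_add2r (\dim U)) subnK ?dimv_le // H.
Qed.


Lemma vperpK U : vperp (vperp U) = U.
Proof.
apply/eqP; rewrite eq_sym eqEdim !dim_vperp subKn ?dimv_le // leqnn andbT.
apply/subvP => u Hu; rewrite memv_perp; apply/forallP => v; apply/implyP.
by rewrite memv_perp dotfC => /forallP /(_ u) /implyP; apply.
Qed.

Lemma vperpS U V : (U <= V)%VS -> (vperp V <= vperp U)%VS.
Proof.
move=> /subvP H; apply/subvP => v; rewrite !memv_perp => /forallP Hv.
apply/forallP => u; apply/implyP => /H Hu.
by have /implyP := Hv u; apply.
Qed.

End Perp.


Section Jumps.
Variables (N : nat) (H w : nat -> nat).
Hypothesis H0 : H 0 = 0.
Hypothesis Hstep : forall m, m < N -> H m <= H m.+1 <= (H m).+1.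
Hypothesis Hw : forall i, 1 <= i <= H N ->
  i <= H (w i) /\ w i <= N /\ forall m, m <= N -> i <= H m -> w i <= m.

Lemma Hmono a b : a <= b -> b <= N -> H a <= H b.
Proof.
move=> hab; elim: b hab => [|b IH]; first by rewrite leqn0 => /eqP ->.
rewrite leq_eqVlt => /orP [/eqP -> //| hab] hb.
have := Hstep hb; have := IH hab (ltnW hb); lia.
Qed.

Lemma J1 i : 1 <= i <= H N -> [/\ 1 <= w i, w i <= N, H (w i) = i & H (w i).-1 = i.-1].
Proof.
move=> hi; have [h1 [h2 h3]] := Hw hi.
have w1 : 1 <= w i.
  case E: (w i) => [|x] //; move: h1; rewrite E H0; lia.
have hlt : H (w i).-1 < i.
  rewrite ltnNge; apply/negP => hle.
  have := h3 _ (leq_trans (leq_pred _) h2) hle; lia.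
have := Hstep (m := (w i).-1); rewrite prednK //; move/(_ h2) => hs.
split => //; lia.
Qed.

Lemma J2 m : 1 <= m <= N -> H m = (H m.-1).+1 -> exists2 i, 1 <= i <= H N & w i = m.
Proof.
move=> hm hj; have hi : 1 <= H m <= H N.
  by apply/andP; split; [rewrite hj | apply: Hmono; lia].
exists (H m) => //.
have [h1 [h2 h3]] := Hw hi.
have hle := h3 m (ltac:(lia)) (leqnn _).
apply/eqP; rewrite eqn_leq hle /=; rewrite leqNgt; apply/negP => hlt.
have := Hmono (a := w (H m)) (b := m.-1) ltac:(lia) ltac:(lia); lia.
Qed.
End Jumps.

Lemma natcore (N k : nat) (F G d dp : nat -> nat) :
  k <= N -> F 0 = 0 -> F N = N - k ->
  (forall m, m < N -> F m <= F m.+1 <= (F m).+1) ->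
  (forall m, m <= N -> G m + N = F (N - m) + k + m) ->
  (forall i, 1 <= i <= N - k -> i <= F (d i) /\ d i <= N /\
      forall m, m <= N -> i <= F m -> d i <= m) ->
  (forall j, 1 <= j <= k -> j <= G (dp j) /\ dp j <= N /\
      forall m, m <= N -> j <= G m -> dp j <= m) ->
  (forall m : nat, (1 <= m <= N)%N <->
     ((exists2 j, (1 <= j <= k)%N & dp j = m) \/
      (exists2 i, (1 <= i <= N - k)%N & (N + 1 - d i)%N = m))) /\
  (forall i j, (1 <= i <= N - k)%N -> (1 <= j <= k)%N -> dp j <> (N + 1 - d i)%N).
Proof.
move=> kN F0 FN Fs GF Hd Hdp.
have G0 : G 0 = 0 by have := GF 0 (leq0n _); rewrite subn0 FN; lia.
have GN : G N = k by have := GF N (leqnn _); rewrite subnn F0; lia.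
have Gs : forall m, m < N -> G m <= G m.+1 <= (G m).+1.
  move=> m hm; have := GF m (ltnW hm); have := GF m.+1 hm.
  have := Fs (N - m.+1) ltac:(lia); have -> : (N - m.+1).+1 = N - m by lia.
  lia.
have Hd' : forall i, 1 <= i <= F N -> i <= F (d i) /\ d i <= N /\
      forall m, m <= N -> i <= F m -> d i <= m by rewrite FN.
have Hdp' : forall j, 1 <= j <= G N -> j <= G (dp j) /\ dp j <= N /\
      forall m, m <= N -> j <= G m -> dp j <= m by rewrite GN.
split.
  move=> m; split.
    move=> hm.
    have hF := Fs (N - m) ltac:(lia).
    have e1 : (N - m).+1 = N - m.-1 by lia.
    rewrite e1 in hF.
    have hG1 := GF m ltac:(lia); have hG2 := GF m.-1 ltac:(lia).
    case: (ltnP (F (N - m)) (F (N - m.-1))) => hc.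
      have e2 : (N - m.-1).-1 = N - m by lia.
      have hj : F (N - m.-1) = (F (N - m.-1).-1).+1 by rewrite e2; lia.
      right; have [i hi di] := J2 F0 Fs Hd' (m := N - m.-1) ltac:(lia) hj.
      exists i; first by rewrite -FN.
      lia.
    left; have [j hj dj] := J2 G0 Gs Hdp' (m := m) ltac:(lia) ltac:(lia).
    exists j; first by rewrite -GN.
    done.
  case=> [[j hj <-]|[i hi <-]].
    by have [] := J1 G0 Gs Hdp' (i := j) ltac:(lia); lia.
  by have [] := J1 F0 Fs Hd' (i := i) ltac:(lia); lia.
move=> i j hi hj E.
have [a1 a2 a3 a4] := J1 F0 Fs Hd' (i := i) ltac:(lia).
have [b1 b2 b3 b4] := J1 G0 Gs Hdp' (i := j) ltac:(lia).
have hG1 := GF (dp j) b2; have hG2 := GF (dp j).-1 ltac:(lia).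
have e1 : N - dp j = (d i).-1 by lia.
have e2 : N - (dp j).-1 = d i by lia.
rewrite e1 in hG1; rewrite e2 in hG2.
lia.
Qed.


Definition pb (P : Prop) : bool := if excluded_middle_informative P then true else false.
Lemma pbP (P : Prop) : reflect P (pb P).
Proof. by rewrite /pb; case: excluded_middle_informative => h; constructor. Qed.

Lemma dim_behead (F : fieldType) (vT : vectType F) (U : {vspace vT}) :
  \dim <<behead (vbasis U)>> = (\dim U).-1.
Proof.
have hf := basis_free (vbasisP U); have hs := size_tuple (vbasis U).
move: hf hs; case: (tval (vbasis U)) => [|v s] /=.
  by move=> _ <-; rewrite span_nil dimv0.
by rewrite free_cons => /andP [_ /eqP ->] <-.
Qed.

Lemma behead_sub (F : fieldType) (vT : vectType F) (U : {vspace vT}) :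
  (<<behead (vbasis U)>> <= U)%VS.
Proof. by apply/span_subvP => v /mem_behead /vbasis_mem. Qed.

Section Mat.
Variables (l : nat) (K : 'I_l -> finFieldType) (n : 'I_l -> nat).
Local Notation L := (subsp K n).
Local Notation N := (\sum_(i < l) n i)%N.

Lemma L_ext (X Y : L) : (forall i, X i = Y i) -> X = Y.
Proof. exact: functional_extensionality_dep. Qed.

Lemma ssub_refl (X : L) : ssub X X. Proof. by move=> i; exact: subvv. Qed.
Lemma ssub_trans (X Y Z : L) : ssub X Y -> ssub Y Z -> ssub X Z.
Proof. by move=> h1 h2 i; exact: subv_trans (h1 i) (h2 i). Qed.

Lemma Rk_le (X : L) : (Rk X <= N)%N.
Proof. by apply: leq_sum => i _; exact: dimv_le. Qed.

Lemma Rk_full : Rk (sfull K n) = N.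
Proof. by apply: eq_bigr => i _; rewrite /sfull dimvf dim_matrix mul1r. Qed.

Lemma Rk_perp (X : L) : Rk (sperp X) = (N - Rk X)%N.
Proof.
have : (Rk (sperp X) + Rk X = N)%N.
  rewrite /Rk -big_split /=; apply: eq_bigr => i _.
  by rewrite /sperp dim_vperp subnK // dimv_le.
lia.
Qed.

Lemma sperpK (X : L) : sperp (sperp X) = X.
Proof. by apply: L_ext => i; rewrite /sperp vperpK. Qed.

Lemma sperpS (X Y : L) : ssub X Y -> ssub (sperp Y) (sperp X).
Proof. by move=> h i; apply: vperpS. Qed.

Lemma down (X : L) : (0 < Rk X)%N -> exists2 X' : L, ssub X' X & Rk X' = (Rk X).-1.
Proof.
case: (pickP (fun i => 0 < \dim (X i))%N) => [i hi|h]; last first.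
  by rewrite /Rk big1 // => i _; have := h i; case: (\dim _).
move=> _.
exists (fun j => if j == i then <<behead (vbasis (X j))>>%VS else X j).
  by move=> j; case: (j == i); [exact: behead_sub | exact: subvv].
rewrite /Rk (bigD1 i) //= [in RHS](bigD1 i) //= eqxx dim_behead.
have -> : (\sum_(j < l | j != i) \dim (if j == i then <<behead (vbasis (X j))>>%VS else X j)
   = \sum_(j < l | j != i) \dim (X j))%N.
  by apply: eq_bigr => j /negbTE ->.
move: hi; case: (\dim (X i)) => // d _ /=; lia.
Qed.

Lemma up (X : L) : (Rk X < N)%N -> exists2 Y : L, ssub X Y & Rk Y = (Rk X).+1.
Proof.
move=> h; have [Z hZ hR] := down (X := sperp X) ltac:(rewrite Rk_perp; lia).
exists (sperp Z).
  by rewrite -{1}(sperpK X); apply: sperpS.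
rewrite Rk_perp hR Rk_perp; lia.
Qed.

Lemma exists_rk m : (m <= N)%N -> exists X : L, Rk X = m.
Proof.
have H : forall t, (t <= N)%N -> exists X : L, Rk X = (N - t)%N.
  elim => [|t IH] ht.
    by exists (sfull K n); rewrite Rk_full subn0.
  have [X hX] := IH (ltnW ht).
  have [X' _ hX'] := down (X := X) ltac:(lia).
  by exists X'; rewrite hX'; lia.
move=> hm; have [X hX] := H (N - m)%N ltac:(lia).
by exists X; rewrite hX; lia.
Qed.

Section Prof.
Variable r : L -> nat.
Hypothesis A1 : forall X, (r X <= Rk X)%N.
Hypothesis A2 : forall X Y, ssub X Y -> (r X <= r Y)%N.
Hypothesis A3 : forall X Y, ssub X Y -> (r Y <= r X + (Rk Y - Rk X))%N.

Definition Fp m := (\max_(s < m.+1 | pb (exists X : L, Rk X = m /\ nullity r X = s)) s)%N.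

Lemma Fp_ub X : (nullity r X <= Fp (Rk X))%N.
Proof.
have hs : (nullity r X < (Rk X).+1)%N by rewrite /nullity; lia.
apply: (leq_bigmax_cond (Ordinal hs) (F := fun s : 'I_(Rk X).+1 => nat_of_ord s)).
by apply/pbP; exists X.
Qed.

Lemma Fp_attain m : (m <= N)%N -> exists X : L, Rk X = m /\ nullity r X = Fp m.
Proof.
move=> hm; have [X hX] := exists_rk hm.
have hs : (nullity r X < m.+1)%N by rewrite /nullity; lia.
rewrite /Fp (bigmax_eq_arg (Ordinal hs)); last by apply/pbP; exists X.
by case: arg_maxnP => [|i /pbP [Y [h1 h2]] _]; [apply/pbP; exists X | exists Y].
Qed.

Lemma Fp_le m : (Fp m <= m)%N.
Proof. by apply/bigmax_leqP => i _; rewrite -ltnS. Qed.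

Lemma Fp_step m : (m < N)%N -> (Fp m <= Fp m.+1 <= (Fp m).+1)%N.
Proof.
move=> hm; apply/andP; split.
  have [X [h1 h2]] := Fp_attain (ltnW hm).
  have [Y hXY hY] := up (X := X) ltac:(lia).
  have := Fp_ub Y; have := A3 hXY; have := A1 X; have := A1 Y.
  rewrite hY h1 -h2 /nullity; lia.
have [Y [h1 h2]] := Fp_attain hm.
have [X hXY hX] := down (X := Y) ltac:(lia).
have := Fp_ub X; have := A2 hXY; have := A1 X; have := A1 Y.
rewrite hX h1 -h2 /nullity /=; lia.
Qed.

Lemma Fp_N : Fp N = (N - r (sfull K n))%N.
Proof.
have [X [h1 h2]] := Fp_attain (leqnn N).
have hs : ssub X (sfull K n) by move=> i; exact: subvf.
have := A2 hs; have := A1 X; have := A3 hs; have := Fp_ub (sfull K n); rewrite Rk_full -h2 /nullity h1 Rk_full; lia.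
Qed.

Lemma descend X i : (1 <= i <= nullity r X)%N ->
  exists X' : L, (Rk X' <= Rk X)%N /\ nullity r X' = i.
Proof.
move: {2}(Rk X) (leqnn (Rk X)) => t; elim: t X => [|t IH] X ht hi.
  by move: hi; rewrite /nullity; lia.
case: (eqVneq (nullity r X) i) => [<-|hne]; first by exists X.
have [X' hX' hR] := down (X := X) ltac:(move: hi; rewrite /nullity; lia).
have hi' : (1 <= i <= nullity r X')%N.
  by have := A2 hX'; have := A1 X'; have := A1 X; move: hi hne; rewrite /nullity hR; lia.
have [Z [hZ1 hZ2]] := IH X' ltac:(lia) hi'.
by exists Z; split => //; lia.
Qed.

Lemma gw_prop i d : (1 <= i)%N -> is_gen_weight r i d ->
  (i <= Fp d)%N /\ (d <= N)%N /\ forall m, (m <= N)%N -> (i <= Fp m)%N -> (d <= m)%N.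
Proof.
move=> hi [[X [h1 h2]] hmin]; split; first by rewrite -h2 -h1 Fp_ub.
split; first by rewrite -h2 Rk_le.
move=> m hm him; have [X' [hX1 hX2]] := Fp_attain hm.
have [Z [hZ1 hZ2]] := descend (X := X') (i := i) ltac:(lia).
by have := hmin Z hZ2; lia.
Qed.
End Prof.

Section Rho.
Variable rho : L -> nat.
Hypothesis hm : is_sum_matroid rho.

Lemma addC (X Y : L) i : ssub X Y -> (X i + (Y i :\: X i))%VS = Y i.
Proof. by move=> h; rewrite addvC addv_diff; apply/addv_idPl; exact: h. Qed.

Lemma rhoG X Y : ssub X Y -> (rho Y <= rho X + (Rk Y - Rk X))%N.
Proof.
move=> hXY; pose C : L := fun i => (Y i :\: X i)%VS.
have hS : sadd X C = Y by apply: L_ext => i; rewrite /sadd /C addC.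
have hR : Rk Y = (Rk X + Rk C)%N.
  rewrite /Rk -big_split; apply: eq_bigr => i _ /=.
  by rewrite -dimv_disjoint_sum ?addC // capvC capv_diff.
case: hm => R1 R2 R3; have := R3 X C; rewrite hS; have := R1 C; lia.
Qed.

Local Notation k := (rho (sfull K n)).

Lemma rho_perp_ge X : (k <= rho (sperp X) + Rk X)%N.
Proof.
have hs : ssub (sperp X) (sfull K n) by move=> i; exact: subvf.
have := rhoG hs; rewrite Rk_full Rk_perp; have := Rk_le X; lia.
Qed.

Lemma rho_le_k X : (rho X <= k)%N.
Proof. by case: hm => _ R2 _; apply: R2 => i; exact: subvf. Qed.

Lemma D1 X : (dual_rank rho X <= Rk X)%N.
Proof. by rewrite /dual_rank; have := rho_le_k (sperp X); lia. Qed.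

Lemma D2 X Y : ssub X Y -> (dual_rank rho X <= dual_rank rho Y)%N.
Proof.
move=> h; have := rhoG (sperpS h); rewrite !Rk_perp /dual_rank.
have := Rk_le X; have := Rk_le Y; have := rho_le_k (sperp X).
have := rho_perp_ge X; have := rho_perp_ge Y.
have : (Rk X <= Rk Y)%N by apply: leq_sum => i _; apply: dimvS.
lia.
Qed.

Lemma D3 X Y : ssub X Y -> (dual_rank rho Y <= dual_rank rho X + (Rk Y - Rk X))%N.
Proof.
move=> h; case: hm => _ R2 _; have := R2 _ _ (sperpS h); rewrite /dual_rank.
have := rho_perp_ge X; have := rho_perp_ge Y.
have : (Rk X <= Rk Y)%N by apply: leq_sum => i _; apply: dimvS.
lia.
Qed.

Lemma R1' X : (rho X <= Rk X)%N. Proof. by case: hm. Qed.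
Lemma R2' X Y : ssub X Y -> (rho X <= rho Y)%N. Proof. by case: hm => _ h _; apply: h. Qed.

Lemma null_dual Y : (nullity (dual_rank rho) Y + N = nullity rho (sperp Y) + k + Rk Y)%N.
Proof.
rewrite /nullity /dual_rank Rk_perp.
have := rho_perp_ge Y; have := rho_le_k (sperp Y); have := R1' (sperp Y).
rewrite Rk_perp; have := Rk_le Y; lia.
Qed.

Lemma dual_formula m : (m <= N)%N ->
  (Fp (dual_rank rho) m + N = Fp rho (N - m) + k + m)%N.
Proof.
move=> hmN; apply/eqP; rewrite eqn_leq; apply/andP; split.
  have [Y [h1 h2]] := Fp_attain (dual_rank rho) hmN.
  rewrite -h2 null_dual h1; have := Fp_ub rho (sperp Y); rewrite Rk_perp h1; lia.
have [Z [h1 h2]] := Fp_attain rho (leq_subr m N).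
have := Fp_ub (dual_rank rho) (sperp Z); have := null_dual (sperp Z).
rewrite sperpK Rk_perp h1 h2; have -> : (N - (N - m) = m)%N by lia.
lia.
Qed.
End Rho.
End Mat.

Theorem mainTheorem10 (l : nat) (K : 'I_l -> finFieldType) (n : 'I_l -> nat)
  (rho : subsp K n -> nat) (d dp : nat -> nat) :
  (0 < l)%N -> (forall i, 0 < n i)%N ->
  is_sum_matroid rho ->
  let k := rho (sfull K n) in
  let N := (\sum_(i < l) n i)%N in
  (forall i, (1 <= i <= N - k)%N -> is_gen_weight rho i (d i)) ->
  (forall j, (1 <= j <= k)%N -> is_gen_weight (dual_rank rho) j (dp j)) ->
  (forall m : nat, (1 <= m <= N)%N <->
     ((exists2 j, (1 <= j <= k)%N & dp j = m) \/
      (exists2 i, (1 <= i <= N - k)%N & (N + 1 - d i)%N = m))) /\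
  (forall i j, (1 <= i <= N - k)%N -> (1 <= j <= k)%N -> dp j <> (N + 1 - d i)%N).
Proof.
move=> _ _ hm k N hd hdp.
have A1 := R1' hm; have A2 := R2' hm; have A3 := rhoG hm.
have B1 := D1 hm; have B2 := D2 hm; have B3 := D3 hm.
apply: (natcore (F := Fp rho) (G := Fp (dual_rank rho))).
- by have := A1 (sfull K n); rewrite Rk_full.
- by have := Fp_le rho 0; rewrite leqn0 => /eqP.
- exact: Fp_N.
- by move=> m; apply: Fp_step.
- by move=> m; apply: dual_formula.
- move=> i hi; apply: gw_prop => //; [by case/andP: hi | exact: hd].
- move=> j hj; apply: gw_prop => //; [by case/andP: hj | exact: hdp].
Qed.
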